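(* Let $P,Q\in\mathbb{C}[z_1,\dots,z_d]$ be nonzero polynomials all of whose coefficients are real and non-negative. Then \[ \|P\,Q\|_a\ge\|P\|_a\,\|Q\|_a . \]
   Context: For multi-indices $\alpha\in\mathbb{N}^d$ write $z^\alpha=z_1^{\alpha_1}\cdots z_d^{\alpha_d}$ and $\alpha!=\alpha_1!\cdots\alpha_d!$. The apolar inner product on $\mathbb{C}[z_1,\dots,z_d]$ is $\langle \sum c_\alpha z^\alpha,\sum d_\alpha z^\alpha\rangle_a=\sum_\alpha\alpha!\,c_\alpha\overline{d_\alpha}$, with norm $\|P\|_a=\sqrt{\langle P,P\rangle_a}$. *)

(* Defs.v *)
From HB Require Import structures.
From Stdlib Require Import Reals.
From mathcomp Require Import all_boot all_order all_algebra.
From mathcomp Require Import Rstruct.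
From mathcomp Require Import complex.
From mathcomp Require Import mpoly.
Set Implicit Arguments. Unset Strict Implicit. Unset Printing Implicit Defensive.
Import Order.TTheory GRing.Theory Num.Theory.
Local Open Scope ring_scope.

Notation CC := (complex R).

Definition mfact (d : nat) (m : 'X_{1..d}) : nat := \prod_(i < d) (m i)`!.

Definition apolar_inner (d : nat) (P Q : {mpoly CC[d]}) : CC :=
  \sum_(m <- undup (msupp P ++ msupp Q)) (mfact m)%:R * P@_m * (Q@_m)^*.

Definition apolar_norm (d : nat) (P : {mpoly CC[d]}) : CC :=
  sqrtC (apolar_inner P P).

(* All coefficients of P are real and non-negative
   (in a numClosedField, 0 <= c means c is real and non-negative). *)
Definition nonneg_coeffs (d : nat) (P : {mpoly CC[d]}) : Prop :=
  forall m : 'X_{1..d}, 0 <= P@_m.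

(* Main.v *)
Require Import Defs.
From HB Require Import structures.
From Stdlib Require Import Reals.
From mathcomp Require Import all_boot all_order all_algebra.
From mathcomp Require Import Rstruct complex mpoly.
Import Order.TTheory GRing.Theory Num.Theory.
Local Open Scope ring_scope.

Lemma sumsq_le (T : eqType) (s : seq T) (f : T -> CC) :
  (forall i, 0 <= f i) -> \sum_(i <- s) f i ^+ 2 <= (\sum_(i <- s) f i) ^+ 2.
Proof.
move=> f0; elim: s => [|x s IH]; first by rewrite !big_nil expr0n.
rewrite !big_cons sqrrD -addrA lerD2l.
have S0 : 0 <= \sum_(i <- s) f i by apply: sumr_ge0.
apply: (le_trans IH); rewrite lerDr; apply: mulrn_wge0; exact: mulr_ge0.
Qed.

Lemma fact_le (d : nat) (a b : 'X_{1..d}) : (mfact a * mfact b <= mfact (a + b)%MM)%N.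
Proof.
rewrite /mfact -big_split /=; apply: leq_prod => i _.
rewrite mnmDE -(@bin_fact (a i + b i) (a i)) ?leq_addr // addKn.
by apply: leq_pmull; rewrite bin_gt0 leq_addr.
Qed.

Lemma sum_super (d : nat) (X : {mpoly CC[d]}) (V : seq 'X_{1..d}) (F : 'X_{1..d} -> CC -> CC) :
  uniq V -> {subset msupp X <= V} -> (forall m, F m 0 = 0) ->
  \sum_(m <- V) F m X@_m = \sum_(m <- msupp X) F m X@_m.
Proof.
move=> uV sub F0; rewrite (bigID (fun m => m \in msupp X)) /=.
rewrite [X in _ + X]big1 ?addr0; last by move=> m /memN_msupp_eq0 ->.
rewrite -big_filter; apply: perm_big; apply: uniq_perm.
- exact: filter_uniq.
- exact: msupp_uniq.
by move=> m; rewrite mem_filter; case E: (m \in msupp X) => //=; rewrite sub.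
Qed.

Lemma inner_self (d : nat) (X : {mpoly CC[d]}) :
  (forall m, 0 <= X@_m) ->
  apolar_inner X X = \sum_(m <- msupp X) (mfact m)%:R * X@_m * X@_m.
Proof.
move=> h; rewrite /apolar_inner.
rewrite (perm_big (msupp X)); last first.
  apply: uniq_perm; [exact: undup_uniq | exact: msupp_uniq|].
  by move=> m; rewrite mem_undup mem_cat orbb.
by apply: eq_bigr => m _; rewrite geC0_conj.
Qed.

Lemma coefM (d : nat) (P Q : {mpoly CC[d]}) g :
  (P * Q)@_g = \sum_(a <- msupp P) \sum_(b <- msupp Q) P@_a * Q@_b * ((a + b)%MM == g)%:R.
Proof.
rewrite mpolyME big_allpairs raddf_sum; apply: eq_bigr => a _.
rewrite raddf_sum; apply: eq_bigr => b _.
change (mcoeff g ((P@_a * Q@_b) *: 'X_[(a + b)%MM]) = P@_a * Q@_b * ((a + b)%MM == g)%:R).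
by rewrite mcoeffZ mcoeffX.
Qed.

From mathcomp Require Import ring.

Lemma sum_delta (d : nat) (V : seq 'X_{1..d}) (c : 'X_{1..d}) (X : CC) :
  uniq V -> c \in V -> \sum_(g <- V) (c == g)%:R * X = X.
Proof.
move=> uV cV; rewrite (perm_big _ (perm_to_rem cV)) big_cons eqxx mul1r.
rewrite big1_seq; first by apply: addr0.
move=> g /andP[_ gr].
have : c \in rem c V = false by rewrite mem_rem_uniqF.
by case: eqP gr => [<- -> //|_ _ _]; rewrite mul0r.
Qed.

Theorem theorem4p1 (d : nat) (P Q : {mpoly CC[d]}) :
  P != 0 -> Q != 0 -> nonneg_coeffs P -> nonneg_coeffs Q ->
  apolar_norm P * apolar_norm Q <= apolar_norm (P * Q).
Proof.
move=> _ _ hP hQ.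
set R := P * Q.
have hR : forall m, 0 <= R@_m.
  move=> m; rewrite /R coefM; apply: sumr_ge0 => a _; apply: sumr_ge0 => b _.
  by rewrite !mulr_ge0 ?ler0n.
set S := msupp P; set T := msupp Q.
set W := [seq (a + b)%MM | a <- S, b <- T].
set V := undup (msupp R ++ W).
have uV : uniq V by exact: undup_uniq.
have AR : apolar_inner R R = \sum_(g <- V) (mfact g)%:R * R@_g * R@_g.
  rewrite inner_self //.
  rewrite -(@sum_super d R V (fun m c => (mfact m)%:R * c * c)) //.
  - by move=> m mR; rewrite mem_undup mem_cat mR.
  - by move=> m; rewrite !mulr0.
have key : apolar_inner P P * apolar_inner Q Q <= apolar_inner R R.
  rewrite AR !inner_self // big_distrl /=.
  rewrite (_ : \sum_(a <- S) _ = \sum_(a <- S) \sum_(b <- T) \sum_(g <- V)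
     (((a + b)%MM == g)%:R * ((mfact a)%:R * P@_a * P@_a * ((mfact b)%:R * Q@_b * Q@_b)))); last first.
    apply: eq_big_seq => a aS; rewrite big_distrr /=; apply: eq_big_seq => b bT.
    rewrite sum_delta //.
    by rewrite mem_undup mem_cat; apply/orP; right; apply/allpairsP; exists (a, b).
  rewrite (eq_bigr (fun a => \sum_(g <- V) \sum_(b <- T)
     (((a + b)%MM == g)%:R * ((mfact a)%:R * P@_a * P@_a * ((mfact b)%:R * Q@_b * Q@_b)))));
    last by move=> a _; rewrite exchange_big.
  rewrite exchange_big /=.
  apply: ler_sum => g _.
  rewrite -mulrA -expr2 /R coefM.
  apply: (@le_trans _ _ (\sum_(a <- S) \sum_(b <- T) (mfact g)%:R * (P@_a * Q@_b * ((a + b)%MM == g)%:R)^+2)).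
    apply: ler_sum => a _; apply: ler_sum => b _.
    case: eqP => [<-|_]; last by rewrite !mulr0 mul0r expr0n /= mulr0.
    rewrite mul1r mulr1.
    have -> : (mfact a)%:R * P@_a * P@_a * ((mfact b)%:R * Q@_b * Q@_b) = (mfact a * mfact b)%:R * (P@_a * Q@_b)^+2 :> CC by rewrite natrM; ring.
    apply: ler_wpM2r; first by rewrite exprn_ge0 // mulr_ge0.
    by rewrite ler_nat fact_le.
  under eq_bigr do rewrite -big_distrr.
  rewrite -big_distrr /=.
  apply: ler_wpM2l; first by rewrite ler0n.
  apply: (@le_trans _ _ (\sum_(a <- S) (\sum_(b <- T) P@_a * Q@_b * ((a + b)%MM == g)%:R)^+2)).
    apply: ler_sum => a _; apply: (@sumsq_le _ T (fun b => P@_a * Q@_b * ((a + b)%MM == g)%:R)) => b; rewrite !mulr_ge0 ?ler0n //.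
  apply: (@sumsq_le _ S (fun a => \sum_(b <- T) P@_a * Q@_b * ((a + b)%MM == g)%:R)) => a; apply: sumr_ge0 => b _; rewrite !mulr_ge0 ?ler0n //.
have nP : 0 <= apolar_inner P P.
  by rewrite inner_self //; apply: sumr_ge0 => m _; rewrite !mulr_ge0 ?ler0n.
have nQ : 0 <= apolar_inner Q Q.
  by rewrite inner_self //; apply: sumr_ge0 => m _; rewrite !mulr_ge0 ?ler0n.
have nR : 0 <= apolar_inner R R.
  by rewrite inner_self //; apply: sumr_ge0 => m _; rewrite !mulr_ge0 ?ler0n.
rewrite /apolar_norm -sqrtCM ?nnegrE // ler_sqrtC ?nnegrE ?mulr_ge0 //.
Qed.
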